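(* For every integer $n\ge2$, \[ Q_n(x)=\left(\frac{1+\sqrt{5+4x}}2\right)^n+\left(\frac{1-\sqrt{5+4x}}2\right)^n . \]
   Context: For $n\ge1$ let $\Xi_n$ be the poset on $\{x_1,\dots,x_n\}$ whose cover relations are exactly: $x_2\prec x_1$, $x_3\prec x_2$, and for $3\le i\le n-1$, $x_i\prec x_{i+1}$ if $i$ is odd and $x_{i+1}\prec x_i$ if $i$ is even (so $x_1>x_2>x_3<x_4>x_5<\cdots$). A filter of a poset is an up-closed subset. The matchable Lucas cube $\Omega_n$ is the graph whose vertices are the filters of $\Xi_n$, two filters adjacent iff one is obtained from the other by deleting a single element. $q_{n,k}$ denotes the number of induced subgraphs of $\Omega_n$ isomorphic to the $k$-dimensional hypercube, and $Q_n(x)=\sum_{k\ge0}q_{n,k}x^k$ is the cube polynomial of $\Omega_n$. *)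

(* Defs.v *)
From HB Require Import structures.
From mathcomp Require Import all_boot all_order all_algebra.
Set Implicit Arguments. Unset Strict Implicit. Unset Printing Implicit Defensive.
Import Order.TTheory GRing.Theory Num.Theory.

(* Elements x_1, ..., x_n of Xi_n are encoded as i : 'I_n, with i <-> x_(i+1). *)

(* Cover relation on 1-based indices: xi_cover p q  <->  x_p < x_q is a cover. *)
Definition xi_cover (p q : nat) : bool :=
  [|| (p == 2) && (q == 1),
      (p == 3) && (q == 2),
      [&& 3 <= p, odd p & q == p.+1]
    | [&& 3 <= q, ~~ odd q & p == q.+1] ].

Definition xi_cov (n : nat) : rel 'I_n := fun a b => xi_cover a.+1 b.+1.

Definition xi_le (n : nat) : rel 'I_n := connect (@xi_cov n).

Definition is_filter (n : nat) (F : {set 'I_n}) : bool :=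
  [forall a, forall b, (xi_le a b && (a \in F)) ==> (b \in F)].

Definition omega_adj (n : nat) (F G : {set 'I_n}) : bool :=
  [exists a, (a \in F) && (G == F :\ a)] || [exists a, (a \in G) && (F == G :\ a)].

Definition cube_adj (k : nat) (A B : {set 'I_k}) : bool :=
  #|(A :\: B) :|: (B :\: A)| == 1.

Definition induced_cube (n k : nat) (S : {set {set 'I_n}}) : bool :=
  [forall F in S, is_filter F] &&
  [exists f : {ffun {set 'I_k} -> {set 'I_n}},
     [&& injectiveb f, S == f @: setT
       & [forall A, forall B, omega_adj (f A) (f B) == cube_adj A B]]].

Definition q_nk (n k : nat) : nat := #|[set S : {set {set 'I_n}} | induced_cube k S]|.

(* cube polynomial Q_n(x) = sum_k q_{n,k} x^k ; q_{n,k} = 0 for k > n since Omega_n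
   has at most 2^n vertices *)
Definition cube_poly (R : nzRingType) (n : nat) : {poly R} :=
  \sum_(k < n.+1) (q_nk n k)%:R *: 'X^k.

(* Main.v *)
Require Import Defs.
From HB Require Import structures.
From mathcomp Require Import all_boot all_order all_algebra.
From mathcomp Require Import ring zify.
Import Order.TTheory GRing.Theory Num.Theory.

Definition cov0 i j := xi_cover i.+1 j.+1.
Definition cu i := cov0 i i.+1.
Definition cd i := cov0 i.+1 i.

Lemma cov0_adj i j : cov0 i j -> (j = i.+1) \/ (i = j.+1).
Proof.
rewrite /cov0 /xi_cover => /or4P [/andP[/eqP a /eqP b]|/andP[/eqP a /eqP b]|/and3P[_ _ /eqP b]|/and3P[_ _ /eqP b]]; lia.
Qed.

Lemma cov0_irr i : cov0 i i = false.
Proof. by apply/negP => /cov0_adj; lia. Qed.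

Lemma cuE i : cu i = (2 <= i) && ~~ odd i.
Proof.
rewrite /cu /cov0 /xi_cover.
case: i => [|[|[|i]]] //=.
rewrite /=.
by rewrite !negbK eqxx andbT; case: (odd i); rewrite /= ?andbF ?orbF; lia.
Qed.

Lemma cdE i : cd i = ~~ cu i.
Proof.
rewrite cuE /cd /cov0 /xi_cover.
case: i => [|[|[|i]]] //=.
idtac.
by rewrite !negbK eqxx andbT; case: (odd i); rewrite /= ?andbF ?orbF; lia.
Qed.

Notation nb s i := (nth true s i).

Definition cnt (s : seq bool) i :=
  [&& ~~ nb s i, (cov0 i i.-1 ==> nb s i.-1) & (cu i ==> nb s i.+1)].
Definition mL s := count (cnt s) (iota 0 (size s)).
Definition base s := count (cnt s) (iota 0 (size s).-1).
Definition lastc (s : seq bool) :=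
  ~~ nb s (size s).-1 && (cov0 (size s).-1 (size s).-2 ==> nb s (size s).-2).
Definition filtL (s : seq bool) :=
  all (fun i => (cu i ==> (nb s i ==> nb s i.+1)) && (cd i ==> (nb s i.+1 ==> nb s i)))
      (iota 0 (size s).-1).

Lemma nb_rcons s b i : nb (rcons s b) i = if i == size s then b else nb s i.
Proof.
rewrite nth_rcons; case: ltngtP => // h.
by rewrite nth_default // ltnW.
Qed.

Lemma iotaS0 n : iota 0 n.+1 = rcons (iota 0 n) n.
Proof. by rewrite -addn1 iotaD add0n cats1. Qed.

Lemma mL_base s : mL s = base s + lastc s.
Proof.
rewrite /mL /base /lastc; case E: (size s) => [|n].
  by rewrite nth_default ?E.
rewrite iotaS0 -cats1 count_cat /= addn0 /cnt.
by rewrite (nth_default _ (_ : size s <= n.+1)) ?E // implybT andbT.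
Qed.

Lemma base_rcons s b :
  base (rcons s b) = base s + (lastc s && (cu (size s).-1 ==> b)).
Proof.
rewrite /base /lastc size_rcons.
case E: (size s) => [|n]; rewrite ?succnK.
  by rewrite nth_default ?E.
rewrite iotaS0 -[rcons (iota _ _) _]cats1 count_cat /= addn0; congr (_ + _).
  apply: eq_in_count => i; rewrite mem_iota add0n => /andP[_ hi].
  rewrite /cnt !nb_rcons E; do 3 (rewrite ifF; last by apply/eqP; lia).
  by [].
rewrite /cnt !nb_rcons E eqxx; do 2 (rewrite ifF; last by apply/eqP; lia).
by rewrite andbA.
Qed.

Lemma lastc_rcons s b :
  lastc (rcons s b) = ~~ b && (cd (size s).-1 ==> nb s (size s).-1).
Proof.
rewrite /lastc size_rcons succnK nb_rcons eqxx.
case E: (size s) => [|n]; rewrite ?succnK.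
  by rewrite [nb s _]nth_default ?E.
by rewrite nb_rcons E ltn_eqF.
Qed.

Lemma filtL_rcons s b :
  filtL (rcons s b) =
  [&& filtL s, cu (size s).-1 ==> (nb s (size s).-1 ==> b)
             & cd (size s).-1 ==> (b ==> nb s (size s).-1)].
Proof.
rewrite /filtL size_rcons.
case E: (size s) => [|n]; rewrite ?succnK.
  by rewrite [nb s _]nth_default ?E // !implybT /=.
rewrite iotaS0 all_rcons andbC; congr (_ && _).
  apply: eq_in_all => i; rewrite mem_iota add0n => /andP[_ hi].
  by rewrite !nb_rcons E; do 2 (rewrite ifF; last by apply/eqP; lia).
rewrite !nb_rcons E eqxx ifF; last by apply/eqP; lia.
by [].
Qed.

Lemma mL_rcons s b : mL (rcons s b) =
  base s + (lastc s && (cu (size s).-1 ==> b))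
         + (~~ b && (cd (size s).-1 ==> nb s (size s).-1)).
Proof. by rewrite mL_base base_rcons lastc_rcons. Qed.

Lemma cu_even m : 2 <= m -> ~~ odd m -> cu m /\ ~~ cd m.
Proof. by move=> h1 h2; rewrite cdE cuE h1 h2. Qed.

Lemma cu_odd m : odd m -> ~~ cu m /\ cd m.
Proof. by move=> h; rewrite cdE cuE h andbF. Qed.

Local Open Scope ring_scope.

Section G.
Variable R : comNzRingType.
Variable y : R.

Definition gL s := if filtL s then y ^+ mL s else 0.

Lemma gL_true s :
  gL (rcons s true) = if cd (size s).-1 ==> nb s (size s).-1 then gL s else 0.
Proof.
rewrite /gL filtL_rcons mL_rcons !implybT andbT /= addn0 -mL_base.
by case: (filtL s); case: (_ ==> _).
Qed.

Lemma gL_tf s : (2 <= size s)%N -> ~~ odd (size s) ->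
  gL (rcons (rcons s true) false) = 0.
Proof.
move=> h1 h2; have [c1 c2] := cu_even _ h1 h2.
by rewrite /gL filtL_rcons size_rcons /= nb_rcons eqxx c1 andbF.
Qed.

Lemma gL_ff s : (2 <= size s)%N -> ~~ odd (size s) ->
  gL (rcons (rcons s false) false) = y * gL s.
Proof.
move=> h1 h2; have [c1 c2] := cu_even _ h1 h2.
have [c3 c4] : ~~ cu (size s).-1 /\ cd (size s).-1.
  move: h1 h2; case: (size s) => [|k] //= _ /negPn h; exact: cu_odd.
move: c1 c2 c3 c4 => /idP e1 /negbTE e2 /negbTE e3 /idP e4.
rewrite /gL !filtL_rcons !size_rcons /= e2 e3 /= !andbT implybT nb_rcons eqxx e1 /= andbT.
rewrite mL_rcons size_rcons /= andbT e1 e2 andbF addn0 /= base_rcons e3 /= andbT -mL_base.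
case: (filtL s) => //; last by rewrite mulr0.
by rewrite addn1 exprS.
Qed.

Lemma gL_uf s u : odd (size s) ->
  gL (rcons (rcons s u) false) = y ^+ u * gL (rcons s u).
Proof.
move=> h; have [/negbTE c1 c2] := cu_odd _ h.
rewrite /gL filtL_rcons size_rcons /= c1 c2 /= andbT.
rewrite mL_rcons size_rcons /= c1 c2 /= andbT -mL_base nb_rcons eqxx.
case: (filtL _) => //; last by rewrite mulr0.
by rewrite exprD mulrC; case: u.
Qed.
End G.
Arguments gL {R}.

Fixpoint allL n : seq (seq bool) :=
  if n is m.+1 then [seq rcons s b | s <- allL m, b <- [:: false; true]] else [:: [::]].

Lemma allL_size n s : s \in allL n -> size s = n.
Proof.
elim: n s => [|n IH] s /=; first by rewrite inE => /eqP ->.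
case/flatten_mapP => s2 /IH h; rewrite !inE => /orP[] /eqP ->;
by rewrite size_rcons h.
Qed.

Section P.
Variable R : comNzRingType.
Variable y : R.

Lemma sum_allL (F : seq bool -> R) n :
  \sum_(s <- allL n.+1) F s = \sum_(s <- allL n) (F (rcons s false) + F (rcons s true)).
Proof.
rewrite /= big_flatten big_map; apply: eq_bigr => s _.
by rewrite !big_cons big_nil /= addr0.
Qed.

Definition P n := \sum_(s <- allL n) gL y s.

Lemma SA1 n : odd n -> (3 <= n)%N -> \sum_(s <- allL n) gL y (rcons s true) = P n.
Proof.
move=> h1 h2; rewrite /P big_seq [RHS]big_seq; apply: eq_bigr => s /allL_size hs.
have [_ /negbTE c2] : cu n.-1 /\ ~~ cd n.-1.
  apply: cu_even; first by lia.
  by move: h1; case: (n) => //= k; rewrite negbK.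
by rewrite gL_true hs c2.
Qed.

Lemma SA2 n : odd n -> (3 <= n)%N ->
  \sum_(s <- allL n) gL y (rcons s false) = y * P n.-1.
Proof.
case: n => [|m] // h1 h2.
rewrite sum_allL /P mulr_sumr big_seq [RHS]big_seq; apply: eq_bigr => s /allL_size hs.
have e1 : (2 <= size s)%N by rewrite hs; lia.
have e2 : ~~ odd (size s) by rewrite hs; exact: h1.
by rewrite gL_ff // gL_tf // addr0.
Qed.

Lemma rec_odd n : odd n -> (3 <= n)%N -> P n.+1 = P n + y * P n.-1.
Proof.
move=> h1 h2; rewrite {1}/P sum_allL big_split /= SA1 // SA2 //.
by rewrite addrC.
Qed.

Lemma rec_even n : ~~ odd n -> (4 <= n)%N -> P n.+1 = P n + y * P n.-1.
Proof.
case: n => [|m] // h1 h2.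
have o : odd m by move: h1 => /= /negPn.
have h3 : (3 <= m)%N by lia.
rewrite {1}/P sum_allL.
have -> : \sum_(i <- allL m.+1) (gL y (rcons i false) + gL y (rcons i true)) =
   \sum_(s <- allL m) (gL y (rcons s false) + (1 + y) * gL y (rcons s true)).
  rewrite sum_allL big_seq [RHS]big_seq; apply: eq_bigr => s /allL_size hs.
  have [_ c2] := cu_odd _ o.
  rewrite !gL_uf ?hs // [gL y (rcons (rcons s false) true)]gL_true.
  rewrite [gL y (rcons (rcons s true) true)]gL_true !size_rcons /= !nb_rcons hs eqxx c2 /=.
  by rewrite expr0 expr1; ring.
rewrite big_split /= -mulr_sumr SA2 // SA1 // /=.
rewrite (rec_odd m o h3).
ring.
Qed.

Lemma rec_all n : (3 <= n)%N -> P n.+1 = P n + y * P n.-1.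
Proof.
move=> h; case o: (odd n); first exact: rec_odd.
have : n != 3 by apply/eqP => e; rewrite e in o.
move=> ne; apply: rec_even; first by rewrite o.
lia.
Qed.

Lemma P2 : P 2 = 1 + y *+ 2.
Proof.
rewrite /P /= !big_cons big_nil /gL /=.
rewrite /mL /filtL /cnt /cu /cd /cov0 /= !addn0 !add0n expr1 expr0.
ring.
Qed.

Lemma P3 : P 3 = 1 + y *+ 3.
Proof.
rewrite /P /= !big_cons big_nil /gL /=.
rewrite /mL /filtL /cnt /cu /cd /cov0 /= !addn0 !add0n ?expr1 ?expr0.
ring.
Qed.
End P.

Local Close Scope ring_scope.
Set Implicit Arguments. Unset Strict Implicit.

Definition sd (T : finType) (X Y : {set T}) := [set t | (t \in X) (+) (t \in Y)].
Arguments sd {T}.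

Lemma sdE (T : finType) (X Y : {set T}) : (X :\: Y) :|: (Y :\: X) = sd X Y.
Proof. by apply/setP => t; rewrite !inE; case: (t \in X); case: (t \in Y). Qed.

Lemma sd1P (T : finType) (X Y : {set T}) :
  reflect (exists r, forall t, (t \in X) (+) (t \in Y) = (t == r)) (#|sd X Y| == 1).
Proof.
apply: (iffP cards1P) => [[r hr]|[r hr]]; exists r.
  by move=> t; move/setP: hr => /(_ t); rewrite !inE.
by apply/setP => t; rewrite !inE hr.
Qed.

Lemma omega_adjE n (X Y : {set 'I_n}) : omega_adj X Y = (#|sd X Y| == 1).
Proof.
apply/idP/sd1P.
  case/orP => /existsP [a /andP [ha /eqP ->]]; exists a => t; rewrite !inE;
  case: (t =P a) => [->|_]; rewrite ?ha /= ?addbF ?addbT ?addbb //; by case: (t \in _).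
move=> [r hr]; have := hr r; rewrite eqxx.
case hX: (r \in X) => /= hY; apply/orP; [left|right]; apply/existsP; exists r.
  rewrite hX; apply/eqP/setP => t; rewrite !inE; have := hr t.
  case: (t =P r) => [->|_] /=; first by rewrite (negbTE hY).
  by case: (t \in X); case: (t \in Y).
rewrite hY /=; apply/eqP/setP => t; rewrite !inE; have := hr t.
case: (t =P r) => [->|_] /=; first by rewrite hX.
by case: (t \in X); case: (t \in Y).
Qed.

Lemma cube_adjE k (A B : {set 'I_k}) : cube_adj A B = (#|sd A B| == 1).
Proof. by rewrite /cube_adj sdE. Qed.

Section Filters.
Variable n : nat.
Implicit Types F G : {set 'I_n}.

Lemma is_filterP F :
  is_filter F = [forall a, forall b, xi_cov a b ==> (a \in F) ==> (b \in F)].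
Proof.
apply/forallP/forallP => H a; apply/forallP => b; apply/implyP.
  move=> hab; apply/implyP => ha; have := H a => /forallP /(_ b).
  by rewrite /xi_le connect1 // ha.
case/andP => /connectP [p hp ->] {b}.
elim: p a hp => [|c p IH] a //= /andP [hac hp] ha.
apply: IH hp _; have := H a => /forallP /(_ c); by rewrite hac ha.
Qed.

Lemma filter_add G t : is_filter G ->
  is_filter (t |: G) = [forall b, xi_cov t b ==> (b \in G)].
Proof.
rewrite !is_filterP => /forallP H; apply/forallP/forallP => H2 b.
  apply/implyP => htb; have := H2 t => /forallP /(_ b).
  rewrite htb !inE eqxx /= => /orP [/eqP e|//].
  by move: htb; rewrite e /xi_cov -/(cov0 _ _) cov0_irr.
apply/forallP => c; apply/implyP => hbc; apply/implyP; rewrite !inE => /orP [/eqP e|hb].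
  subst b; have := H2 c; rewrite hbc /= => ->; by rewrite orbT.
have := H b => /forallP /(_ c); rewrite hbc hb /= => ->; by rewrite orbT.
Qed.

Lemma union_filter G (B : {set 'I_n}) : is_filter G -> (forall t, t \in B -> is_filter (t |: G)) ->
  is_filter (G :|: B).
Proof.
move=> hG hB; rewrite is_filterP; apply/forallP => a; apply/forallP => b.
apply/implyP => hab; apply/implyP; rewrite !inE => /orP [ha|ha].
  move: hG; rewrite is_filterP => /forallP /(_ a) /forallP /(_ b).
  by rewrite hab ha /= => ->.
have := hB a ha; rewrite is_filterP => /forallP /(_ a) /forallP /(_ b).
rewrite hab !inE eqxx /= => /orP [/eqP e|->]; last by [].
by move: hab; rewrite e /xi_cov -/(cov0 _ _) cov0_irr.
Qed.

Definition MM G := [set t | (t \notin G) && is_filter (t |: G)].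

End Filters.

Section Cube.
Variables n k : nat.
Implicit Types G B X : {set 'I_n}.

Definition phi (G T0 : {set 'I_n}) : {set {set 'I_n}} := [set G :|: B | B in powerset T0].

Lemma mem_phi G (T0 : {set 'I_n}) X : reflect (exists2 B : {set 'I_n}, B \subset T0 & X = G :|: B) (X \in phi G T0).
Proof.
apply: (iffP imsetP) => [[B hB ->]|[B hB ->]]; exists B => //.
  by rewrite powersetE in hB.
by rewrite powersetE.
Qed.

Section Sig.
Variables (T0 : {set 'I_n}) (hk : #|T0| = k).
Definition sigm (i : 'I_k) : 'I_n := enum_val (cast_ord (esym hk) i).
Lemma sigP i : sigm i \in T0.
Proof. exact: enum_valP. Qed.
Lemma sig_inj : injective sigm.
Proof. by move=> i j /enum_val_inj /cast_ord_inj. Qed.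
Lemma sig_img : sigm @: setT = T0.
Proof.
apply/eqP; rewrite eqEcard; apply/andP; split.
  by apply/subsetP => t /imsetP [i _ ->]; exact: sigP.
by rewrite card_imset; [rewrite cardsT card_ord hk | exact: sig_inj].
Qed.
Lemma sig_out t (A : {set 'I_k}) : t \notin T0 -> t \notin sigm @: A.
Proof. by move=> ht; apply/imsetP => [[i _ e]]; move: ht; rewrite e sigP. Qed.
Lemma sig_in t : t \in T0 -> exists i, t = sigm i.
Proof. by rewrite -sig_img => /imsetP [i _ ->]; exists i. Qed.
End Sig.

Lemma phi_cube G (T0 : {set 'I_n}) : is_filter G -> T0 \subset MM G -> #|T0| = k ->
  induced_cube k (phi G T0).
Proof.
move=> hG hT hk.
have hdis : forall t, t \in T0 -> t \notin G.
  by move=> t /(subsetP hT); rewrite inE => /andP [].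
have hfil : forall t, t \in T0 -> is_filter (t |: G).
  by move=> t /(subsetP hT); rewrite inE => /andP [].
apply/andP; split.
  apply/forallP => F; apply/implyP => /mem_phi [B hB ->].
  by apply: union_filter => // t ht; apply: hfil; exact: (subsetP hB).
pose s := sigm hk.
apply/existsP; exists [ffun A : {set 'I_k} => G :|: s @: A].
apply/and3P; split.
- apply/injectiveP => A B; rewrite !ffunE => e.
  apply: (imset_inj (@sig_inj _ hk)); apply/setP => t.
  move/setP: e => /(_ t); rewrite !inE.
  case ht: (t \in T0); first by rewrite (negbTE (hdis _ ht)).
  by rewrite (negbTE (sig_out _ _ (negbT ht))) (negbTE (sig_out _ _ (negbT ht))).
- apply/eqP/setP => X; apply/mem_phi/imsetP => [[B hB ->]|[A _ ->]].
    exists (s @^-1: B) => //; rewrite ffunE; congr (_ :|: _).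
    apply/setP => t; case ht: (t \in T0).
      have [i ->] := sig_in hk ht.
      by rewrite (mem_imset _ _ (@sig_inj _ hk)) inE.
    rewrite (negbTE (sig_out _ _ (negbT ht))); idtac.
    exact: (contraFF (subsetP hB t) ht).
  exists (s @: A); last by rewrite ffunE.
  by apply/subsetP => t /imsetP [i _ ->]; exact: sigP.
- apply/forallP => A; apply/forallP => B; rewrite !ffunE omega_adjE cube_adjE.
  have -> : sd (G :|: s @: A) (G :|: s @: B) = s @: sd A B.
    apply/setP => t; rewrite !inE; case ht: (t \in T0).
      have [i ->] := sig_in hk ht.
      rewrite !(mem_imset _ _ (@sig_inj _ hk)) (negbTE (hdis _ (sigP _ _))) /=.
      by rewrite inE.
    rewrite !(negbTE (sig_out _ _ (negbT ht))) orbF.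
    by rewrite addbb.
  by rewrite card_imset //; exact: sig_inj.
Qed.

Lemma sd1E (T : finType) (X Y : {set T}) r : sd X Y = [set r] ->
  forall t, (t \in X) = (t \in Y) (+) (t == r).
Proof.
move/setP => h t; have := h t; rewrite !inE => <-.
by case: (t \in X); case: (t \in Y).
Qed.

Lemma cube_phi (S : {set {set 'I_n}}) : induced_cube k S ->
  exists G T0 : {set 'I_n}, [/\ is_filter G, T0 \subset MM G, #|T0| = k & S = phi G T0].
Proof.
case/andP => /forallP hS /existsP [f /and3P [/injectiveP finj /eqP hSf /forallP hadj]].
have adj : forall A B : {set 'I_k}, cube_adj A B -> exists r, sd (f A) (f B) = [set r].
  move=> A B h; have := hadj A => /forallP /(_ B) /eqP; rewrite h omega_adjE.
  by move/cards1P.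
pose f0 := f set0.
have ex1 : forall i, exists r, sd (f [set i]) f0 == [set r].
  move=> i; have [|r hr] := adj [set i] set0; last by exists r; rewrite hr.
  rewrite cube_adjE; apply/cards1P; exists i; apply/setP => t.
  by rewrite !inE addbF.
pose tau i := xchoose (ex1 i).
have htau : forall i t, (t \in f [set i]) = (t \in f0) (+) (t == tau i).
  by move=> i t; apply: sd1E; apply/eqP; exact: (xchooseP (ex1 i)).
have tinj : injective tau.
  move=> i j e; apply/set1_inj/finj/setP => t.
  by rewrite !htau e.
have memD1 : forall (A : {set 'I_k}) i t, i \in A ->
    (t \in tau @: (A :\ i)) = (t \in tau @: A) && (t != tau i).
  move=> A i t hi; apply/imsetP/andP => [[j hj ->]|[/imsetP [j hj ->] hne]].
    move: hj; rewrite !inE => /andP [hji hj]; split; first exact: imset_f.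
    by rewrite (inj_eq tinj).
  exists j => //; rewrite !inE hj andbT; apply: contraNneq hne => ->.
  by [].
have core : forall (A : {set 'I_k}) t, (t \in f A) = (t \in f0) (+) (t \in tau @: A).
  suff H : forall m (A : {set 'I_k}), #|A| <= m -> forall t, (t \in f A) = (t \in f0) (+) (t \in tau @: A).
    by move=> A; apply: (H #|A|).
  elim=> [|m IH] A hA t.
    by move: hA; rewrite leqn0 => /eqP/cards0_eq ->; rewrite imset0 inE addbF.
  case: (ltnP #|A| m.+1) => hAm; first by apply: IH.
  have eA : #|A| = m.+1 by apply/eqP; rewrite eqn_leq hA hAm.
  case: m IH hA hAm eA => [|m] IH hA hAm eA.
    move/eqP/cards1P: eA => [i ->].
    by rewrite imset_set1 inE htau.
  have [i hi] : exists i, i \in A by apply/set0Pn; rewrite -card_gt0 eA.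
  have eAi : #|A :\ i| = m.+1 by move: eA; rewrite (cardsD1 i) hi add1n => [[]].
  have [j hj] : exists j, j \in A :\ i by apply/set0Pn; rewrite -card_gt0 eAi.
  have hj' : j \in A by move: (hj); rewrite !inE => /andP [_ h].
  have hji : j != i by move: (hj); rewrite !inE => /andP [h _].
  have eAj : #|A :\ j| = m.+1 by move: eA; rewrite (cardsD1 j) hj' add1n => [[]].
  have eAij : #|A :\ i :\ j| = m by move: eAi; rewrite (cardsD1 j) hj add1n => [[]].
  have IHi := IH (A :\ i) (eq_leq eAi).
  have IHj := IH (A :\ j) (eq_leq eAj).
  have IHij := IH (A :\ i :\ j) (leqW (eq_leq eAij)).
  have cadj : forall l, l \in A -> cube_adj A (A :\ l).
    move=> l hl; rewrite cube_adjE; apply/cards1P; exists l; apply/setP => t'.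
    rewrite !inE; case: (t' =P l) => [->|_]; first by rewrite hl.
    by rewrite /= addbb.
  have [r hr] := adj _ _ (cadj i hi).
  have [r' hr'] := adj _ _ (cadj j hj').
  have e1 := sd1E hr; have e2 := sd1E hr'.
  have uti : tau i \in tau @: A by apply: imset_f.
  have utj : tau j \in tau @: A by apply: imset_f.
  have tij : (tau j == tau i) = false by rewrite (inj_eq tinj); apply/negbTE.
  have tji : (tau i == tau j) = false by rewrite eq_sym.
  case: (r =P tau i) => [er|ner].
    rewrite e1 IHi memD1 // er.
    case: (t =P tau i) => [->|_]; first by rewrite uti /=; case: (_ \in f0).
    by rewrite /= andbT addbF.
  exfalso.
  have er : r = tau j.
    have := e1 (tau i); rewrite e2 IHi IHj !memD1 // uti tji eqxx /= => h.
    have {}h : (tau i == r) = ~~ (tau i == r') by move: h; case: (_ \in f0); case: (_ == r); case: (_ == r').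
    have er' : r' = tau i.
      apply/eqP; rewrite eq_sym; apply: negbFE; rewrite -h.
      by apply/eqP => e; apply: ner.
    have := e1 (tau j); rewrite e2 IHi IHj !memD1 // utj tij eqxx er' tij /= => h2.
    by apply/eqP; rewrite eq_sym; move: h2; case: (_ \in f0); case: (_ == r).
  have : A = A :\ i :\ j.
    apply: finj; apply/setP => t'.
    rewrite e1 IHi IHij !memD1 // er.
    case: (t' =P tau j) => [->|_]; first by rewrite utj tij /=; case: (_ \in f0).
    by rewrite andbT addbF.
  by move/setP => /(_ i); rewrite !inE eqxx hi andbF.
pose T0 := tau @: setT.
pose G := f0 :\: T0.
have inT0 : forall t, t \in T0 -> exists i, t = tau i.
  by move=> t /imsetP [i _ ->]; exists i.
have outT0 : forall (A : {set 'I_k}) t, t \notin T0 -> t \notin tau @: A.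
  move=> A t; apply: contra => /imsetP [i _ ->]; exact: imset_f.
have SE : S = phi G T0.
  rewrite hSf; apply/setP => X; apply/imsetP/mem_phi => [[A _ ->]|[B hB ->]].
    exists (f A :&: T0); first exact: subsetIr.
    apply/setP => t; rewrite !inE; case htT: (t \in T0); first by rewrite /= andbT.
    by rewrite core (negbTE (outT0 A t (negbT htT))) addbF /= andbF orbF.
  exists [set i | (tau i \in B) (+) (tau i \in f0)]; first by [].
  apply/setP => t; rewrite (core [set i | (tau i \in B) (+) (tau i \in f0)] t) !inE.
  case htT: (t \in T0).
    have [i ei] := inT0 t htT; rewrite ei (mem_imset _ _ tinj) inE /=.
    by case: (_ \in f0); case: (_ \in B).
  rewrite (negbTE (outT0 _ t (negbT htT))) addbF /=.
  have -> : (t \in B) = false by apply: (contraFF (subsetP hB t) htT).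
  by rewrite orbF.
have inS : forall B, B \subset T0 -> is_filter (G :|: B).
  move=> B hB; have := hS (G :|: B); rewrite SE.
  by move=> /implyP; apply; apply/mem_phi; exists B.
exists G, T0; split => //.
- by rewrite -[G]setU0; apply: inS; exact: sub0set.
- apply/subsetP => t ht; rewrite inE !inE ht /=.
  rewrite setUC; apply: inS; by rewrite sub1set.
- by rewrite card_imset // cardsT card_ord.
Qed.

Lemma phi_inj G1 (T1 : {set 'I_n}) G2 (T2 : {set 'I_n}) : T1 \subset MM G1 -> T2 \subset MM G2 ->
  phi G1 T1 = phi G2 T2 -> G1 = G2 /\ T1 = T2.
Proof.
have dis : forall G (T : {set 'I_n}) t, T \subset MM G -> t \in T -> t \notin G.
  by move=> G T t hT /(subsetP hT); rewrite inE => /andP [].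
have sub : forall G1 (T1 : {set 'I_n}) G2 (T2 : {set 'I_n}), phi G1 T1 = phi G2 T2 -> G2 \subset G1.
  move=> A1 U1 A2 U2 e; have : A1 \in phi A1 U1.
    by apply/mem_phi; exists set0; rewrite ?sub0set ?setU0.
  by rewrite e => /mem_phi [B _ ->]; exact: subsetUl.
move=> h1 h2 e.
have eG : G1 = G2 by apply/eqP; rewrite eqEsubset (sub _ _ _ _ e) (sub _ _ _ _ (esym e)).
split => //; subst G2.
have subT : forall T T' : {set 'I_n}, T \subset MM G1 -> phi G1 T = phi G1 T' -> T \subset T'.
  move=> T T' hT e'; have : G1 :|: T \in phi G1 T by apply/mem_phi; exists T.
  rewrite e' => /mem_phi [B hB eB]; apply/subsetP => t ht.
  have : t \in G1 :|: B by rewrite -eB inE ht orbT.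
  rewrite inE (negbTE (dis _ _ _ hT ht)) /= => htB; exact: (subsetP hB).
by apply/eqP; rewrite eqEsubset (subT _ _ h1 e) (subT _ _ h2 (esym e)).
Qed.
End Cube.

Lemma q_nkE n k :
  q_nk n k = \sum_(G : {set 'I_n} | is_filter G) 'C(#|MM G|, k).
Proof.
pose PS := [set p : {set 'I_n} * {set 'I_n} |
             is_filter p.1 && ((p.2 \subset MM p.1) && (#|p.2| == k))].
rewrite /q_nk.
have -> : [set S : {set {set 'I_n}} | induced_cube k S] = (fun p => phi p.1 p.2) @: PS.
  apply/setP => S; rewrite inE; apply/idP/imsetP.
    move/cube_phi => [G [T0 [h1 h2 h3 ->]]]; exists (G, T0) => //.
    by rewrite inE /= h1 h2 h3 eqxx.
  move=> [[G T0]]; rewrite inE /= => /and3P [h1 h2 /eqP h3] ->.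
  exact: phi_cube.
rewrite card_in_imset; last first.
  move=> [G1 T1] [G2 T2]; rewrite !inE /= => /and3P [_ h1 _] /and3P [_ h2 _] e.
  by have [-> ->] := phi_inj h1 h2 e.
rewrite /PS -sum1dep_card -(pair_big_dep (fun G : {set 'I_n} => is_filter G)
   (fun G (T : {set 'I_n}) => (T \subset MM G) && (#|T| == k)) (fun _ _ => 1%N)) /=.
by apply: eq_bigr => G _; rewrite sum1dep_card cards_draws.
Qed.


Definition bits n (F : {set 'I_n}) : seq bool := [seq i \in F | i <- enum 'I_n].

Section Bits.
Variable n : nat.
Implicit Types F G : {set 'I_n}.

Lemma size_bits F : size (bits F) = n.
Proof. by rewrite size_map size_enum_ord. Qed.

Lemma nb_bits F (i : 'I_n) : nb (bits F) i = (i \in F).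
Proof. by rewrite (nth_map i) ?size_enum_ord // nth_ord_enum. Qed.

Lemma nb_bits_out F j : (n <= j)%N -> nb (bits F) j = true.
Proof. by move=> h; rewrite nth_default // size_bits. Qed.

Lemma filt_bits F : is_filter F = filtL (bits F).
Proof.
rewrite is_filterP /filtL size_bits.
apply/forallP/allP => [H i|H a].
  rewrite mem_iota add0n => /andP [_ hi].
  have hi0 : (i < n)%N by lia.
  have hi1 : (i.+1 < n)%N by lia.
  have e0 : nb (bits F) i = (Ordinal hi0 \in F) := nb_bits F (Ordinal hi0).
  have e1 : nb (bits F) i.+1 = (Ordinal hi1 \in F) := nb_bits F (Ordinal hi1).
  rewrite e0 e1; apply/andP; split.
    by have := H (Ordinal hi0) => /forallP /(_ (Ordinal hi1)).
  by have := H (Ordinal hi1) => /forallP /(_ (Ordinal hi0)).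
apply/forallP => b; apply/implyP => hab; apply/implyP => ha.
have hab' : cov0 a b := hab.
case: (cov0_adj _ _ hab') => e.
  have hi : (nat_of_ord a \in iota 0 n.-1) by rewrite mem_iota add0n; have := ltn_ord b; rewrite e; lia.
  have := H _ hi; rewrite (nb_bits F a) -e (nb_bits F b) ha.
  have -> : cu a = xi_cov a b by rewrite /xi_cov e.
  by rewrite hab => /andP [].
have hi : (nat_of_ord b \in iota 0 n.-1) by rewrite mem_iota add0n; have := ltn_ord a; rewrite e; lia.
have := H _ hi; rewrite (nb_bits F b) -e (nb_bits F a) ha.
have -> : cd b = xi_cov a b by rewrite /xi_cov e.
by rewrite hab => /andP [_]; rewrite implyTb.
Qed.


Lemma mem_MM_bits G (t : 'I_n) : is_filter G -> (t \in MM G) = cnt (bits G) t.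
Proof.
move=> hG; rewrite inE filter_add // /cnt (nb_bits G t); congr (_ && _).
apply/forallP/andP => [H|[H1 H2] b].
  split; apply/implyP => h.
    have ht : (t.-1 < n)%N by have := ltn_ord t; lia.
    have := H (Ordinal ht) => /implyP; rewrite -(nb_bits G (Ordinal ht)); exact.
  case: (ltnP t.+1 n) => ht; last by rewrite nb_bits_out.
  have := H (Ordinal ht) => /implyP; rewrite -(nb_bits G (Ordinal ht)); exact.
apply/implyP => hab; have hab' : cov0 t b := hab.
case: (cov0_adj _ _ hab') => e.
  have := H2; rewrite /cu -e hab' /= (nb_bits G b); exact.
have e' : nat_of_ord b = t.-1 by rewrite e.
have := H1; rewrite -e' hab' /= (nb_bits G b); exact.
Qed.

Lemma MM_bits G : is_filter G -> #|MM G| = mL (bits G).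
Proof.
move=> hG; rewrite /mL size_bits cardE /enum_mem size_filter -enumT.
rewrite -val_enum_ord count_map; apply: eq_count => t /=.
by rewrite mem_MM_bits.
Qed.

End Bits.

Definition ext n (p : {set 'I_n} * bool) : {set 'I_n.+1} :=
  [set i | if unlift ord_max i is Some j then j \in p.1 else p.2].

Lemma widen_lift n (j : 'I_n) : widen_ord (leqnSn n) j = lift ord_max j.
Proof. by apply: val_inj; rewrite /= /bump leqNgt ltn_ord. Qed.

Lemma bits_ext n (G : {set 'I_n}) b : bits (ext (G, b)) = rcons (bits G) b.
Proof.
rewrite /bits enum_ordSr map_rcons -map_comp; congr rcons.
  by apply: eq_map => j /=; rewrite widen_lift inE liftK.
by rewrite inE unlift_none.
Qed.

Lemma ext_bij n : bijective (@ext n).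
Proof.
exists (fun G : {set 'I_n.+1} => ([set j | lift ord_max j \in G], ord_max \in G)).
  move=> [G b]; rewrite /ext /=; congr pair.
    by apply/setP => j; rewrite !inE liftK.
  by rewrite inE unlift_none.
move=> G; apply/setP => i; rewrite inE /=.
by case: unliftP => [j ->|->]; rewrite ?inE.
Qed.

Local Open Scope ring_scope.
Lemma sum_bits (R : comNzRingType) n (F : seq bool -> R) :
  \sum_(G : {set 'I_n}) F (bits G) = \sum_(s <- allL n) F s.
Proof.
elim: n F => [|n IH] F.
  rewrite /= big_cons big_nil addr0 (big_pred1 set0) => [|G].
    by have /size0nil -> := size_bits (set0 : {set 'I_0}).
  by apply/esym/eqP/setP => [[i hi]].
rewrite (reindex (@ext n)) /=; last by apply: onW_bij; exact: ext_bij.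
rewrite sum_allL -IH.
rewrite -(pair_big (fun _ => true) (fun _ => true) (fun G b => F (bits (ext (G, b))))) /=.
apply: eq_bigr => G _; rewrite big_bool /= !bits_ext.
by rewrite addrC.
Qed.

Local Close Scope ring_scope.
Unset Implicit Arguments. Set Strict Implicit.
Local Open Scope ring_scope.

Lemma binom_widen (R : comNzRingType) (m N : nat) (x : R) : (m <= N)%N ->
  \sum_(k < N.+1) ('C(m, k))%:R * x ^+ k = (1 + x) ^+ m.
Proof.
move=> hmN; rewrite exprDn (big_ord_widen N.+1 (fun k => 1 ^+ (m - k) * x ^+ k *+ 'C(m, k))) //.
rewrite [RHS]big_mkcond; apply: eq_bigr => i _; case: ifP => h.
  by rewrite expr1n mul1r mulr_natl.
by rewrite bin_small ?mul0r // ltnNge -ltnS h.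
Qed.

Lemma cube_sum (C : numClosedFieldType) (n : nat) (x : C) :
  (cube_poly C n).[x] = \sum_(G : {set 'I_n}) gL (1 + x) (bits G).
Proof.
rewrite /cube_poly horner_sum.
under eq_bigr => k _ do rewrite hornerZ hornerXn q_nkE natr_sum mulr_suml.
rewrite exchange_big /= [RHS](bigID (fun G : {set 'I_n} => is_filter G)) /=.
rewrite [X in _ = _ + X]big1 ?addr0; last first.
  by move=> G /negbTE h; rewrite /gL -filt_bits h.
apply: eq_bigr => G hG.
rewrite /gL -filt_bits hG -MM_bits //.
apply: binom_widen.
by rewrite -[X in (_ <= X)%N](card_ord n) max_card.
Qed.

Theorem mainTheorem8 (C : numClosedFieldType) (n : nat) (x : C) :
  (2 <= n)%N ->
  (cube_poly C n).[x] =
    ((1 + sqrtC (5 + 4 * x)) / 2) ^+ n + ((1 - sqrtC (5 + 4 * x)) / 2) ^+ n.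
Proof.
move=> hn; rewrite cube_sum sum_bits.
set r := sqrtC (5 + 4 * x).
set a := (1 + r) / 2; set b := (1 - r) / 2.
set y := 1 + x.
have hr : r ^+ 2 = 5 + 4 * x by rewrite sqrtCK.
have h2 : (2 : C) != 0 by rewrite pnatr_eq0.
have ha : a ^+ 2 = a + y.
  apply/eqP; rewrite -subr_eq0.
  have -> : a ^+ 2 - (a + y) = (r ^+ 2 - (5 + 4 * x)) / 4.
    by rewrite /a /y; field.
  by rewrite hr subrr mul0r.
have hb : b ^+ 2 = b + y.
  apply/eqP; rewrite -subr_eq0.
  have -> : b ^+ 2 - (b + y) = (r ^+ 2 - (5 + 4 * x)) / 4.
    by rewrite /b /y; field.
  by rewrite hr subrr mul0r.
have hab : a + b = 1 by rewrite /a /b; field.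
pose Lf k := a ^+ k + b ^+ k.
have Lrec : forall k, Lf k.+2 = Lf k.+1 + y * Lf k.
  move=> k; rewrite /Lf -[k.+2]addn2 !exprD ha hb !exprS; ring.
have L1 : Lf 1%N = 1 by rewrite /Lf !expr1.
have L0 : Lf 0%N = 2 by rewrite /Lf !expr0.
suff H : forall m, P C y m.+2 = Lf m.+2 /\ P C y m.+3 = Lf m.+3.
  by case: n hn => [|[|m]] // _; case: (H m).
elim=> [|m [IH1 IH2]].
  rewrite P2 P3 !Lrec L1 L0; split; ring.
split => //; by rewrite (rec_all C y m.+3) //= IH2 IH1 (Lrec m.+2).
Qed.
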